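(* For every positive integer $k$ there exists a finite simple graph $G$ such that $\chi(G)-\pi(G)\ge 2^k$.
   Context: An orthogonal vector $d$-coloring of a graph $G$ is an assignment $f:V(G)\to\mathbb{R}^d\setminus\{0\}$ such that $f(u)\perp f(v)$ whenever $uv\in E(G)$; the orthogonal number $\pi(G)$ is the minimum $d$ for which such a coloring exists. $\chi(G)$ is the chromatic number. *)

(* Defs.v *)
From mathcomp Require Import all_boot.
From Stdlib Require Import Reals.

Set Implicit Arguments.
Unset Strict Implicit.
Unset Printing Implicit Defensive.

Definition simple_graph (T : finType) (e : rel T) : Prop :=
  symmetric e /\ irreflexive e.

Definition proper_coloring (T : finType) (e : rel T) (c : nat) (f : T -> 'I_c) : Prop :=
  forall u v, e u v -> f u <> f v.

Definition colorable (T : finType) (e : rel T) (c : nat) : Prop :=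
  exists f : T -> 'I_c, proper_coloring e f.

Definition dotR (d : nat) (x y : 'I_d -> R) : R :=
  List.fold_right Rplus 0%R (map (fun i => (x i * y i)%R) (enum 'I_d)).

Definition nonzero_vec (d : nat) (x : 'I_d -> R) : Prop :=
  exists i : 'I_d, x i <> 0%R.

Definition orthogonal_coloring (T : finType) (e : rel T) (d : nat)
  (f : T -> 'I_d -> R) : Prop :=
  (forall v, nonzero_vec (f v)) /\ (forall u v, e u v -> dotR (f u) (f v) = 0%R).

Definition orth_colorable (T : finType) (e : rel T) (d : nat) : Prop :=
  exists f : T -> 'I_d -> R, orthogonal_coloring e f.

Definition is_least (P : nat -> Prop) (n : nat) : Prop :=
  P n /\ (forall m, P m -> n <= m).

Definition chromatic_number (T : finType) (e : rel T) (n : nat) : Prop :=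
  is_least (colorable e) n.

Definition orthogonal_number (T : finType) (e : rel T) (n : nat) : Prop :=
  is_least (orth_colorable e) n.

(* Main.v *)
From mathcomp Require Import all_boot all_algebra.
From mathcomp Require Import Rstruct.
Require Import Defs.
From mathcomp Require Import all_boot.
From Stdlib Require Import Reals.
From Stdlib Require Import ZArith Lia Classical.

Definition vtab : seq (Z * Z * Z) :=
  [:: (1,0,0); (0,1,0); (0,0,1); (0,1,1); (0,1,-1); (1,0,1); (1,0,-1);
      (1,1,0); (1,-1,0); (1,1,1); (-1,1,1); (1,-1,1); (1,1,-1)]%Z.

Definition vz (n r : nat) : Z :=
  let '(a, b, c) := nth (0,0,0)%Z vtab n in
  match r with 0 => a | 1 => b | _ => c end.

Definition dotz (i j : nat) : Z := (vz i 0 * vz j 0 + vz i 1 * vz j 1 + vz i 2 * vz j 2)%Z.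

Definition e0n (a b : nat) : bool := Z.eqb (dotz a b) 0.
Definition e0 : rel 'I_13 := fun i j => e0n i j.

Lemma e0_sym : symmetric e0.
Proof. move=> i j; rewrite /e0 /e0n /dotz; f_equal; lia. Qed.

Lemma e0_irr : irreflexive e0.
Proof. move=> [n hn]; rewrite /e0 /=.
do 13 (case: n hn => [|n] hn; first by vm_compute). by []. Qed.

Lemma nat_search (x0 x1 x2 x3 x4 x5 x6 x7 x8 x9 x10 x11 x12 : nat) :
  x0 < 3 -> x1 < 3 -> x2 < 3 -> x3 < 3 -> x4 < 3 -> x5 < 3 -> x6 < 3 ->
  x7 < 3 -> x8 < 3 -> x9 < 3 -> x10 < 3 -> x11 < 3 -> x12 < 3 ->
  x1 <> x0 -> x2 <> x0 -> x2 <> x1 -> x3 <> x0 -> x4 <> x0 -> x4 <> x3 ->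
  x5 <> x1 -> x6 <> x1 -> x6 <> x5 -> x7 <> x2 -> x8 <> x2 -> x8 <> x7 ->
  x9 <> x4 -> x9 <> x6 -> x9 <> x8 -> x10 <> x4 -> x10 <> x5 -> x10 <> x7 ->
  x11 <> x3 -> x11 <> x6 -> x11 <> x7 -> x12 <> x3 -> x12 <> x5 -> x12 <> x8 -> False.
Proof.
intros.
Ltac st x := destruct x as [|[|[|x]]]; try congruence; try done.
st x0; st x1; st x2; st x3; st x4; st x5; st x6; st x7; st x8; st x9; st x10; st x11; st x12.
Qed.

Lemma e0_not3 (g : 'I_13 -> 'I_3) : ~ proper_coloring e0 g.
Proof.
move=> Hg.
pose c n := nat_of_ord (g (inord n)).
have B n : c n < 3 by rewrite /c.
have E a b : a < 13 -> b < 13 -> e0n a b -> c a <> c b.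
  move=> ha hb h; rewrite /c => /val_inj; apply: Hg; by rewrite /e0 !inordK.
apply: (@nat_search (c 0) (c 1) (c 2) (c 3) (c 4) (c 5) (c 6) (c 7) (c 8) (c 9) (c 10) (c 11) (c 12));
  try apply: B; apply: E => //; by vm_compute.
Qed.

Import GRing.Theory.

Definition eJ (m : nat) : rel ('I_m * 'I_13) :=
  fun x y => if x.1 == y.1 then e0 x.2 y.2 else true.

Lemma eJ_simple m : simple_graph (eJ m).
Proof.
split.
- move=> x y; rewrite /eJ eq_sym; case: (y.1 == x.1) => //; exact: e0_sym.
- move=> x; rewrite /eJ eqxx; exact: e0_irr.
Qed.

Lemma least_ex (P : nat -> Prop) n : P n -> exists l, is_least P l.
Proof.
elim/ltn_ind: n => n IH Pn.
case: (classic (exists m, m < n /\ P m)) => [[m [lt Pm]]|H]; first exact: IH m lt Pm.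
exists n; split => // m Pm; rewrite leqNgt; apply/negP => lt; apply: H; by exists m.
Qed.

Section RealPart.
Local Open Scope ring_scope.
Lemma dotR_sum d (x y : 'I_d -> R) : dotR x y = (\sum_(i < d) x i * y i).
Proof.
rewrite /dotR -big_enum /=.
elim: (enum 'I_d) => [|a s IH] /=; first by rewrite big_nil. by rewrite big_cons IH.
Qed.

Lemma sum3 (i j : nat) :
  (\sum_(r < 3) IZR (vz i r) * IZR (vz j r)) = IZR (dotz i j).
Proof.
rewrite !big_ord_recr big_ord0 /= /dotz !plus_IZR !mult_IZR.
by rewrite add0r.
Qed.

Definition X3 m := ('I_m * 'I_3)%type.

Definition fJ m (x : 'I_m * 'I_13) : 'I_#|{: X3 m}| -> R :=
  fun t => let p := enum_val t in if p.1 == x.1 then IZR (vz x.2 p.2) else 0%R.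

Lemma sum_pair m (G : X3 m -> R) :
  \sum_(x in {: X3 m}) G x = \sum_(a' < m) \sum_(r < 3) G (a', r).
Proof. rewrite pair_bigA /=; by apply: eq_big => // -[]. Qed.

Lemma fJ_orth m : orthogonal_coloring (eJ m) (@fJ m).
Proof.
split.
- move=> [a i]; rewrite /nonzero_vec.
  have Hi := e0_irr i; rewrite /e0 /e0n /dotz in Hi.
  have [r Hr] : exists r : 'I_3, vz i r <> 0%Z.
    case: (Z.eq_dec (vz i 0) 0) => [h0|h0]; last by exists ord0.
    case: (Z.eq_dec (vz i 1) 0) => [h1|h1]; last by exists (inord 1); rewrite inordK.
    case: (Z.eq_dec (vz i 2) 0) => [h2|h2]; last by exists (inord 2); rewrite inordK.
    by move: Hi; rewrite h0 h1 h2.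
  exists (enum_rank ((a, r) : X3 m)).
  rewrite /fJ enum_rankK /= eqxx; exact: eq_IZR_contrapositive.
- move=> [a i] [b j] /=; rewrite dotR_sum -(big_enum_val (fun p : X3 m =>
     ((if p.1 == a then IZR (vz i p.2) else 0%R) * (if p.1 == b then IZR (vz j p.2) else 0%R)))) /=.
  rewrite sum_pair /eJ /=.
  case: eqP => [<- He|Hab _].
  + rewrite (bigD1 a) //= [X in (_ + X)]big1 ?addr0.
    * under eq_bigr do rewrite eqxx. rewrite sum3. have /Z.eqb_spec H0 : Z.eqb (dotz i j) 0 := He. by rewrite H0.
    * move=> a' /negbTE ->; apply: big1 => r _; by rewrite mul0r.
  + apply: big1 => a' _; apply: big1 => r _.
    case: eqP => [->|_]; last by rewrite mul0r.
    case: eqP => [Hb|_]; [by case: Hab | by rewrite mulr0].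
Qed.
End RealPart.

Lemma card_bigcup_disj {I : eqType} {T : finType} {S : I -> {set T}} {s : seq I} :
  uniq s -> (forall a b, a != b -> [disjoint S a & S b]) ->
  #|\bigcup_(a <- s) S a| = \sum_(a <- s) #|S a|.
Proof.
move=> Us Hd; elim: s Us => [|a s IH] /=; first by rewrite !big_nil cards0.
move=> /andP [an Us]; rewrite !big_cons -IH // cardsU.
suff -> : S a :&: \bigcup_(b <- s) S b = set0 by rewrite cards0 subn0.
apply/setP => x; rewrite !inE; apply/negP => /andP [xa].
elim: s an {IH Us} => [|b s IH2]; first by rewrite big_nil inE.
rewrite inE negb_or big_cons inE => /andP [ab an] /orP [xb|]; last exact: IH2.
by have := Hd a b ab; rewrite disjoint_sym => /disjointFr /(_ xb); rewrite xa.
Qed.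

Lemma chi_lb m c (f : 'I_m * 'I_13 -> 'I_c) : proper_coloring (eJ m) f -> 4 * m <= c.
Proof.
move=> Hf.
pose S (a : 'I_m) := [set f (a, i) | i : 'I_13].
have card4 a : 4 <= #|S a|.
  rewrite leqNgt; apply/negP => H3.
  have x0S : f (a, ord0) \in S a by apply/imsetP; exists ord0.
  have le3 : #|S a| <= 3 by [].
  apply: (@e0_not3 (fun i => widen_ord le3 (enum_rank_in x0S (f (a, i))))).
  move=> i j eij /(congr1 val) /= /val_inj.
  have fS k : f (a, k) \in S a by apply/imsetP; exists k.
  move=> /(enum_rank_in_inj (fS i) (fS j)); apply: Hf; by rewrite /eJ /= eqxx.
have disj a b : a != b -> [disjoint S a & S b].
  move=> ab; rewrite -setI_eq0; apply/eqP/setP => y; rewrite !inE.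
  apply/negP => /andP [/imsetP [i _ ->] /imsetP [j _ Heq]].
  by apply: (Hf (a, i) (b, j)) => //; rewrite /eJ /= (negbTE ab).
have : #|\bigcup_(a : 'I_m) S a| <= c.
  by apply: leq_trans (max_card _) _; rewrite card_ord.
rewrite (card_bigcup_disj (index_enum_uniq _) disj) /=.
apply: leq_trans; rewrite mulnC -[X in X * 4]card_ord -sum_nat_const.
by apply: leq_sum => a _; apply: card4.
Qed.

Theorem mainTheorem4 (k : nat) (hk : 0 < k) :
  exists (T : finType) (e : rel T) (chi pi : nat),
    [/\ simple_graph e, chromatic_number e chi, orthogonal_number e pi
      & 2 ^ k + pi <= chi].
Proof.
pose m := 2 ^ k.
have Ho : orth_colorable (eJ m) #|{: X3 m}| by exists (@fJ m); exact: fJ_orth.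
have Hc : colorable (eJ m) #|{: 'I_m * 'I_13}|.
  exists enum_rank => u v euv /enum_rank_inj E; move: euv; rewrite E.
  by rewrite (eJ_simple m).2.
have [chi Hchi] := @least_ex _ _ Hc.
have [pi Hpi] := @least_ex _ _ Ho.
exists ('I_m * 'I_13)%type, (eJ m), chi, pi; split => //.
- exact: eJ_simple.
- have Hpi3 : pi <= m * 3 by have := Hpi.2 _ Ho; rewrite card_prod !card_ord.
  have [f Hf] := Hchi.1.
  have := @chi_lb m chi f Hf.
  rewrite -/m => H4; apply: leq_trans H4.
  apply: leq_trans (leq_add (leqnn m) Hpi3) _.
  by rewrite -[4]/(1+3) mulnDl mul1n (mulnC m).
Qed.
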